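(* Let $X=\prod_{i=1}^d X_i$ and let $f,g$, $x^*_\eta$, the probabilities $p_1,\dots,p_d$, the constants $C_f,C_g$, the function $\mathcal L$ and the RB-IRG iterates $\{x_k\}$ be as described in the context. Let $\{\gamma_k\}$ and $\{\eta_k\}$ be positive, non-increasing sequences with $\gamma_0\eta_0<\frac{1}{\mu\, p_{\min}}$. Then for every $k\ge 1$, $$\mathbb E\big[\mathcal L(x_{k+1},x^*_{\eta_k})\,\big|\,\mathcal F_k\big]\le \big(1-\mu\gamma_k\eta_k p_{\min}\big)\mathcal L(x_k,x^*_{\eta_{k-1}})+\frac{2C_g^2}{p_{\min}^2\mu^3\gamma_k\eta_k}\Big(\frac{\eta_{k-1}}{\eta_k}-1\Big)^2+2\gamma_k^2\big(C_f^2+\eta_0^2C_g^2\big).$$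
   Context: $X=\prod_{i=1}^d X_i$ with each $X_i\subseteq\mathbb R^{n_i}$ nonempty, closed and convex, $\sum_i n_i=n$; for $x\in\mathbb R^n$, $x^{(i)}$ denotes its $i$-th block. $f,g:\mathbb R^n\to(-\infty,\infty]$ are proper convex (possibly nondifferentiable) functions, $g$ is $\mu$-strongly convex with $\mu>0$, and $X\subseteq\operatorname{int}(\operatorname{dom} f\cap\operatorname{dom} g)$. For $\eta>0$, $x^*_\eta$ denotes the unique minimizer of $f+\eta g$ over $X$. For $x\in X$, $\tilde\nabla f(x)\in\partial f(x)$ and $\tilde\nabla g(x)\in\partial g(x)$ are the subgradients used by the algorithm, and $\tilde\nabla_i f(x),\tilde\nabla_i g(x)$ their $i$-th blocks; there are constants $C_{f,i},C_{g,i}$ with $\|\tilde\nabla_i f(x)\|\le C_{f,i}$, $\|\tilde\nabla_i g(x)\|\le C_{g,i}$ for all $x\in X$, and $C_f=\sqrt{\sum_i C_{f,i}^2}$, $C_g=\sqrt{\sum_i C_{g,i}^2}$. Probabilities $p_1,\dots,p_d>0$ with $\sum_i p_i=1$; $p_{\min}=\min_i p_i$, $p_{\max}=\max_i p_i$. Algorithm RB-IRG: given $x_0\in X$, positive stepsizes $\gamma_k$, regularization parameters $\eta_k$ and a scalar $r$, set $S_0=\gamma_0^r$, $\bar x_0=x_0$; for $k=0,1,\dots$: draw $i_k\in\{1,\dots,d\}$ i.i.d. with $\mathrm{Prob}(i_k=i)=p_i$; set $x_{k+1}^{(i_k)}=\Pi_{X_{i_k}}\big(x_k^{(i_k)}-\gamma_k(\tilde\nabla_{i_k}f(x_k)+\eta_k\tilde\nabla_{i_k}g(x_k))\big)$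 (Euclidean projection) and $x_{k+1}^{(i)}=x_k^{(i)}$ for $i\ne i_k$; set $S_{k+1}=S_k+\gamma_{k+1}^r$, $\bar x_{k+1}=(S_k\bar x_k+\gamma_{k+1}^r x_{k+1})/S_{k+1}$. $\mathcal F_k$ denotes the information $\{i_0,\dots,i_{k-1}\}$ (conditioning is on the $\sigma$-algebra they generate). For $x,y\in\mathbb R^n$, $\mathcal L(x,y)=\sum_{i=1}^d p_i^{-1}\|x^{(i)}-y^{(i)}\|^2$. *)

(* Defs.v *)
From HB Require Import structures.
From mathcomp Require Import all_boot all_order all_algebra.
From mathcomp Require Import mathcomp_extra boolp classical_sets functions reals constructive_ereal.
Set Implicit Arguments. Unset Strict Implicit. Unset Printing Implicit Defensive.
Import Order.TTheory GRing.Theory Num.Theory.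
Local Open Scope ring_scope.
Local Open Scope classical_set_scope.

Section Defs.
Variables (R : realType) (d : nat) (n : 'I_d -> nat).

(* R^n with n = sum_i n_i, written as the product of the blocks R^{n_i}. *)
Definition bvec := forall i : 'I_d, 'rV[R]_(n i).

Definition badd (x y : bvec) : bvec := fun i => x i + y i.
Definition bscale (a : R) (x : bvec) : bvec := fun i => a *: x i.
Definition bsub (x y : bvec) : bvec := fun i => x i - y i.

Definition sqnorm m (v : 'rV[R]_m) : R := \sum_(j < m) v 0 j ^+ 2.
Definition bdot (x y : bvec) : R := \sum_i \sum_(j < n i) x i 0 j * y i 0 j.
Definition bsqnorm (x : bvec) : R := \sum_i sqnorm (x i).

Definition closed_set m (A : set 'rV[R]_m) :=
  forall v, ~ A v -> exists2 e : R, 0 < e & forall w, sqnorm (w - v) < e ^+ 2 -> ~ A w.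
Definition convex_set m (A : set 'rV[R]_m) :=
  forall u v (t : R), A u -> A v -> 0 <= t <= 1 -> A (t *: u + (1 - t) *: v).

Definition prod_set (Xs : forall i : 'I_d, set 'rV[R]_(n i)) : set bvec :=
  [set x | forall i, Xs i (x i)].

Definition proper_fun (f : bvec -> \bar R) :=
  (forall x, f x != -oo%E) /\ exists x, f x != +oo%E.
Definition convex_fun (f : bvec -> \bar R) :=
  forall x y (t : R), 0 <= t <= 1 ->
    (f (badd (bscale t x) (bscale (1 - t) y)) <= t%:E * f x + (1 - t)%:E * f y)%E.
Definition strongly_convex_fun (mu : R) (f : bvec -> \bar R) :=
  forall x y (t : R), 0 <= t <= 1 ->
    (f (badd (bscale t x) (bscale (1 - t) y))
      <= t%:E * f x + (1 - t)%:E * f y - (mu / 2 * t * (1 - t) * bsqnorm (bsub x y))%:E)%E.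
Definition dom (f : bvec -> \bar R) : set bvec := [set x | f x != +oo%E].
Definition interior (A : set bvec) : set bvec :=
  [set x | exists2 e : R, 0 < e & forall y, bsqnorm (bsub y x) < e ^+ 2 -> A y].

Definition is_subgrad (f : bvec -> \bar R) (x s : bvec) :=
  forall y, (f x + (bdot s (bsub y x))%:E <= f y)%E.

Definition is_minimizer (A : set bvec) (F : bvec -> \bar R) (x : bvec) :=
  A x /\ forall y, A y -> (F x <= F y)%E.

Definition is_proj m (A : set 'rV[R]_m) (z p : 'rV[R]_m) :=
  A p /\ forall y, A y -> sqnorm (z - p) <= sqnorm (z - y).

Definition Lfun (p : 'I_d -> R) (x y : bvec) : R :=
  \sum_i (p i)^-1 * sqnorm (x i - y i).

(* p_min (all p_i lie in (0,1], so 1 is a neutral start) *)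
Definition pmin (p : 'I_d -> R) : R := \big[Num.min/1]_i p i.

Definition Cnorm (C : 'I_d -> R) : R := Num.sqrt (\sum_i C i ^+ 2).

(* Probability of the cylinder event {i_0 = h_0, ..., i_{k-1} = h_{k-1}}
   for i.i.d. indices with law p. *)
Definition hprob (p : 'I_d -> R) (h : seq 'I_d) : R := \prod_(j <- h) p j.

(* Conditional expectation E[Y | F_k] evaluated on the atom {(i_0..i_{k-1}) = h}
   (size h = k), for a random variable Y = Y(i_0,...,i_k):
   E[Y 1_atom] / P(atom). *)
Definition cond_exp (p : 'I_d -> R) (Y : seq 'I_d -> R) (h : seq 'I_d) : R :=
  (\sum_(i : 'I_d) hprob p (rcons h i) * Y (rcons h i)) / hprob p h.

(* x : seq 'I_d -> bvec gives x_k as a function of the realized indices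
   (i_0,...,i_{k-1}); this says x is generated by RB-IRG. *)
Definition RBIRG_iterates (Xs : forall i : 'I_d, set 'rV[R]_(n i))
    (sf sg : bvec -> bvec) (gam eta : nat -> R) (x0 : bvec) (x : seq 'I_d -> bvec) :=
  x [::] = x0 /\
  forall (h : seq 'I_d) (i : 'I_d),
    is_proj (Xs i)
      (x h i - gam (size h) *: (sf (x h) i + eta (size h) *: sg (x h) i))
      (x (rcons h i) i)
    /\ forall j, j != i -> x (rcons h i) j = x h j.

End Defs.

(* Main.v *)
Require Import Defs.
From HB Require Import structures.
From mathcomp Require Import all_boot all_order all_algebra.
From mathcomp Require Import mathcomp_extra boolp classical_sets functions reals constructive_ereal.
From mathcomp Require Import ring lra.
Import Order.TTheory GRing.Theory Num.Theory.
Set Implicit Arguments. Unset Strict Implicit. Unset Printing Implicit Defensive.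
Local Open Scope ring_scope.
Local Open Scope classical_set_scope.

Section Vec.
Variables (R : realType) (m : nat).
Implicit Types (u v w : 'rV[R]_m) (a b : R).

Definition dotv u v : R := \sum_(j < m) u 0 j * v 0 j.

Lemma sqnorm_dot u : sqnorm u = dotv u u.
Proof. by apply: eq_bigr => j _; rewrite expr2. Qed.

Lemma dotvC u v : dotv u v = dotv v u.
Proof. by apply: eq_bigr => j _; rewrite mulrC. Qed.

Lemma dotvDl u v w : dotv (u + v) w = dotv u w + dotv v w.
Proof. rewrite /dotv -big_split; apply: eq_bigr => j _; rewrite !mxE /=; ring. Qed.

Lemma dotvZl a u w : dotv (a *: u) w = a * dotv u w.
Proof. rewrite /dotv mulr_sumr; apply: eq_bigr => j _; rewrite !mxE; ring. Qed.

Lemma dotvNl u w : dotv (- u) w = - dotv u w.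
Proof. rewrite /dotv -sumrN; apply: eq_bigr => j _; rewrite !mxE; ring. Qed.

Lemma dotvBl u v w : dotv (u - v) w = dotv u w - dotv v w.
Proof. by rewrite dotvDl dotvNl. Qed.

Lemma dotvDr u v w : dotv w (u + v) = dotv w u + dotv w v.
Proof. by rewrite dotvC dotvDl !(dotvC w). Qed.
Lemma dotvZr a u w : dotv w (a *: u) = a * dotv w u.
Proof. by rewrite dotvC dotvZl !(dotvC w). Qed.
Lemma dotvBr u v w : dotv w (u - v) = dotv w u - dotv w v.
Proof. by rewrite dotvC dotvBl !(dotvC w). Qed.

Lemma sqnorm_ge0 u : 0 <= sqnorm u.
Proof. by apply: sumr_ge0 => j _; rewrite sqr_ge0. Qed.

Lemma sqnormD u v : sqnorm (u + v) = sqnorm u + 2 * dotv u v + sqnorm v.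
Proof. rewrite !sqnorm_dot dotvDl !dotvDr (dotvC v u); ring. Qed.

Lemma sqnormB u v : sqnorm (u - v) = sqnorm u - 2 * dotv u v + sqnorm v.
Proof. rewrite !sqnorm_dot dotvBl !dotvBr (dotvC v u); ring. Qed.

Lemma sqnormZ a u : sqnorm (a *: u) = a ^+ 2 * sqnorm u.
Proof. rewrite !sqnorm_dot dotvZl dotvZr; ring. Qed.

Lemma sqnormBC u v : sqnorm (u - v) = sqnorm (v - u).
Proof. rewrite !sqnormB (dotvC u v); ring. Qed.

Lemma young a b u v : 2 * a * b * dotv u v <= a ^+ 2 * sqnorm u + b ^+ 2 * sqnorm v.
Proof.
have := sqnorm_ge0 (a *: u - b *: v).
rewrite sqnormB !sqnormZ dotvZl dotvZr => H; lra.
Qed.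

Lemma sqnorm0 : sqnorm (0 : 'rV[R]_m) = 0.
Proof. by rewrite /sqnorm big1 // => j _; rewrite mxE expr0n. Qed.

End Vec.

Lemma small_le0 (R : realType) (a S : R) : 0 <= S ->
  (forall t, 0 < t -> t <= 1 -> a <= t * S) -> a <= 0.
Proof.
move=> S0 H; rewrite leNgt; apply/negP => a0.
have Sa : 0 < S + a by lra.
have t0 : 0 < a / (2 * (S + a)) by apply: divr_gt0; lra.
have t1 : a / (2 * (S + a)) <= 1.
  rewrite ler_pdivrMr; lra.
have := H _ t0 t1.
have -> : a / (2 * (S + a)) * S = (a / 2) * (S / (S + a)).
  field; lra.
have : S / (S + a) <= 1 by rewrite ler_pdivrMr; lra.
move=> h1 h2.
have : a / 2 * (S / (S + a)) <= a / 2 * 1 by rewrite ler_pM2l //; lra.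
lra.
Qed.

Lemma sqnormN (R : realType) m (u : 'rV[R]_m) : sqnorm (- u) = sqnorm u.
Proof. by rewrite !sqnorm_dot dotvNl dotvC dotvNl opprK. Qed.

Lemma proj_nonexp (R : realType) m (A : set 'rV[R]_m) z P y :
  convex_set A -> is_proj A z P -> A y -> sqnorm (P - y) <= sqnorm (z - y).
Proof.
move=> cA [AP HP] Ay.
have key : dotv (z - P) (y - P) <= 0.
  apply: (@small_le0 _ _ (sqnorm (y - P) / 2)).
    by apply: divr_ge0 => //; apply: sqnorm_ge0.
  move=> t t0 t1.
  have Aw : A (t *: y + (1 - t) *: P) by apply: cA => //; rewrite (ltW t0) t1.
  have := HP _ Aw.
  have -> : z - (t *: y + (1 - t) *: P) = (z - P) - t *: (y - P).
    by apply/rowP => j; rewrite !mxE; ring.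
  rewrite (sqnormB (z - P)) sqnormZ dotvZr => h.
  have : t * dotv (z - P) (y - P) <= t * (t * (sqnorm (y - P) / 2)) by lra.
  by rewrite ler_pM2l.
have -> : P - y = - (y - P) by rewrite opprB.
have -> : z - y = (z - P) - (y - P) by rewrite opprB addrA subrK.
rewrite sqnormN (sqnormB (z - P)); have := sqnorm_ge0 (z - P); lra.
Qed.

Lemma sq_bound (R : realType) (s C : R) : 0 <= s -> Num.sqrt s <= C -> s <= C ^+ 2.
Proof.
move=> s0 h; rewrite -(sqr_sqrtr s0) !expr2.
by apply: ler_pM => //; apply: sqrtr_ge0.
Qed.

Lemma noninc_le0 (R : realType) (a : nat -> R) : (forall k, a k.+1 <= a k) ->
  forall k, a k <= a 0%N.
Proof. by move=> H; elim=> [|k IH] //; apply: le_trans (H k) IH. Qed.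

Theorem lemma4 (R : realType) (d : nat) (n : 'I_d -> nat)
  (Xs : forall i : 'I_d, set 'rV[R]_(n i))
  (f g : (@bvec R d n) -> \bar R) (mu : R)
  (xstar : R -> (@bvec R d n))
  (sf sg : (@bvec R d n) -> (@bvec R d n)) (Cf Cg : 'I_d -> R)
  (p : 'I_d -> R) (gam eta : nat -> R) (x0 : (@bvec R d n)) (x : seq 'I_d -> (@bvec R d n)) :
  (forall i, Xs i !=set0) ->
  (forall i, closed_set (Xs i)) ->
  (forall i, convex_set (Xs i)) ->
  proper_fun f -> convex_fun f ->
  proper_fun g -> convex_fun g ->
  0 < mu -> strongly_convex_fun mu g ->
  prod_set Xs `<=` interior (dom f `&` dom g) ->
  (forall et : R, 0 < et ->
     is_minimizer (prod_set Xs) (fun z => (f z + et%:E * g z)%E) (xstar et)) ->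
  (forall z, prod_set Xs z -> is_subgrad f z (sf z)) ->
  (forall z, prod_set Xs z -> is_subgrad g z (sg z)) ->
  (forall z i, prod_set Xs z -> Num.sqrt (sqnorm (sf z i)) <= Cf i) ->
  (forall z i, prod_set Xs z -> Num.sqrt (sqnorm (sg z i)) <= Cg i) ->
  (forall i, 0 < p i) -> \sum_i p i = 1 ->
  (forall k, 0 < gam k) -> (forall k, gam k.+1 <= gam k) ->
  (forall k, 0 < eta k) -> (forall k, eta k.+1 <= eta k) ->
  gam 0%N * eta 0%N < 1 / (mu * pmin p) ->
  prod_set Xs x0 ->
  RBIRG_iterates Xs sf sg gam eta x0 x ->
  forall (k : nat) (h : seq 'I_d), (1 <= k)%N -> size h = k ->
    cond_exp p (fun h' => Lfun p (x h') (xstar (eta k))) h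
    <= (1 - mu * gam k * eta k * pmin p) * Lfun p (x h) (xstar (eta k.-1))
       + 2 * Cnorm Cg ^+ 2 / (pmin p ^+ 2 * mu ^+ 3 * gam k * eta k)
           * (eta k.-1 / eta k - 1) ^+ 2
       + 2 * gam k ^+ 2 * (Cnorm Cf ^+ 2 + eta 0%N ^+ 2 * Cnorm Cg ^+ 2).
Proof.
move=> _ _ Hcv [pf1 _] cf [pg1 _] cg mu0 scg HXint Hmin Hsf Hsg HCf HCg p0 psum
  gam0 gamdec eta0 etadec Hge x0X [Hx0 Hstep] k h k1 hk.
set X := prod_set Xs.
have XC : forall z w t, X z -> X w -> 0 <= t <= 1 ->
    X (badd (bscale t z) (bscale (1 - t) w)).
  by move=> z w t Xz Xw t01 i; apply: Hcv.
have xin : forall h, X (x h).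
  elim/last_ind => [|h' i IH]; first by rewrite Hx0.
  move=> j; have [[Pin _] Hoth] := Hstep h' i.
  by case: (eqVneq j i) => [->|ne]; [exact: Pin | rewrite Hoth //; exact: IH].
have bsub0 : forall z : bvec R n, bsqnorm (bsub z z) = 0.
  by move=> z; rewrite /bsqnorm big1 // => i _; rewrite /bsub subrr sqnorm0.
have domz : forall z, X z -> f z != +oo%E /\ g z != +oo%E.
  move=> z Xz; have [e e0 He] := HXint z Xz.
  have [] := He z; last by [].
  by rewrite bsub0 exprn_gt0.
have finf : forall z, X z -> f z = (fine (f z))%:E.
  by move=> z Xz; rewrite fineK // fin_numE pf1 (domz z Xz).1.
have fing : forall z, X z -> g z = (fine (g z))%:E.
  by move=> z Xz; rewrite fineK // fin_numE pg1 (domz z Xz).2.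
set F := fun z => fine (f z).
set G := fun z => fine (g z).
have bdotN : forall s z w : bvec R n, bdot s (bsub w z) = - bdot s (bsub z w).
  move=> s z w; rewrite /bdot -sumrN; apply: eq_bigr => i _.
  change (dotv (s i) (w i - z i) = - dotv (s i) (z i - w i)).
  rewrite !dotvBr; ring.
have bsqC : forall z w : bvec R n, bsqnorm (bsub w z) = bsqnorm (bsub z w).
  by move=> z w; apply: eq_bigr => i _; rewrite /bsub sqnormBC.
have bdotZ : forall (s z w : bvec R n) (t : R), bdot s (bsub (badd (bscale t w) (bscale (1 - t) z)) z)
     = t * bdot s (bsub w z).
  move=> s z w t; rewrite /bdot mulr_sumr; apply: eq_bigr => i _.
  change (dotv (s i) (t *: w i + (1 - t) *: z i - z i) = t * dotv (s i) (w i - z i)).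
  have -> : t *: w i + (1 - t) *: z i - z i = t *: (w i - z i).
    by apply/rowP => j; rewrite !mxE; ring.
  by rewrite dotvZr.
have sgf : forall z w, X z -> X w -> F z + bdot (sf z) (bsub w z) <= F w.
  move=> z w Xz Xw; have := Hsf z Xz w.
  by rewrite (finf z Xz) (finf w Xw) -EFinD lee_fin.
have sgg : forall z w, X z -> X w -> G z + bdot (sg z) (bsub w z) <= G w.
  move=> z w Xz Xw; have := Hsg z Xz w.
  by rewrite (fing z Xz) (fing w Xw) -EFinD lee_fin.
have sgstrong : forall z w, X z -> X w ->
    G z + bdot (sg z) (bsub w z) + mu / 2 * bsqnorm (bsub w z) <= G w.
  move=> z w Xz Xw.
  have D0 : 0 <= bsqnorm (bsub w z) by apply: sumr_ge0 => i _; apply: sqnorm_ge0.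
  suff : G z + bdot (sg z) (bsub w z) + mu / 2 * bsqnorm (bsub w z) - G w <= 0 by lra.
  apply: (@small_le0 _ _ (mu / 2 * bsqnorm (bsub w z))).
    by apply: mulr_ge0 => //; apply: divr_ge0 => //; apply: ltW.
  move=> t t0 t1.
  have h1 := Hsg z Xz (badd (bscale t w) (bscale (1 - t) z)).
  have h2 := scg w z t; rewrite (ltW t0) t1 in h2; have {}h2 := h2 isT.
  have := le_trans h1 h2.
  rewrite (fing z Xz) (fing w Xw) bdotZ -!EFinM -!EFinD -?EFinB lee_fin => h3.
  rewrite -(ler_pM2l t0); rewrite -/(G z) -/(G w) in h3; lra.
have minstrong : forall et z, 0 < et -> X z ->
    mu * et / 2 * bsqnorm (bsub z (xstar et))
    <= F z + et * G z - (F (xstar et) + et * G (xstar et)).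
  move=> et z et0 Xz; have [Xy Hy] := Hmin et et0.
  set y := xstar et in Xy Hy *.
  have D0 : 0 <= bsqnorm (bsub z y) by apply: sumr_ge0 => i _; apply: sqnorm_ge0.
  suff : mu * et / 2 * bsqnorm (bsub z y) - (F z + et * G z - (F y + et * G y)) <= 0 by lra.
  apply: (@small_le0 _ _ (mu * et / 2 * bsqnorm (bsub z y))).
    by apply: mulr_ge0 => //; apply: divr_ge0 => //; apply: mulr_ge0; apply: ltW.
  move=> t t0 t1.
  have t01 : 0 <= t <= 1 by rewrite (ltW t0) t1.
  have Xt := XC z y t Xz Xy t01.
  set zt := badd (bscale t z) (bscale (1 - t) y) in Xt *.
  have h1 := Hy zt Xt.
  have h2 := cf z y t t01.
  have h3 := scg z y t t01.
  rewrite (finf y Xy) (fing y Xy) (finf zt Xt) (fing zt Xt) -!EFinM -!EFinD lee_fin in h1.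
  rewrite (finf y Xy) (finf z Xz) (finf zt Xt) -!EFinM -!EFinD lee_fin in h2.
  rewrite (fing y Xy) (fing z Xz) (fing zt Xt) -!EFinM -!EFinD -?EFinB lee_fin in h3.
  rewrite -/(F y) -/(G y) -/(F zt) -/(G zt) -/(F z) -/(G z) in h1 h2 h3.
  have h4 := ler_wpM2l (ltW et0) h3.
  rewrite -(ler_pM2l t0); lra.
case: k k1 hk => [//|k] _ hk; rewrite /= -/X.
set xk := x h; set y := xstar (eta k.+1); set y' := xstar (eta k).
have Xxk : X xk := xin h.
have [Xy _] := Hmin _ (eta0 k.+1); have [Xy' _] := Hmin _ (eta0 k).
rewrite -/y -/y' in Xy Xy'.
have hprobS : forall h i, hprob p (rcons h i) = hprob p h * p i.
  by move=> h0 i; rewrite /hprob big_rcons.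
have hp0 : 0 < hprob p h by apply: prodr_gt0 => i _.
have LS : forall i, Lfun p (x (rcons h i)) y = Lfun p xk y
    + (p i)^-1 * (sqnorm (x (rcons h i) i - y i) - sqnorm (xk i - y i)).
  move=> i; have [_ Hoth] := Hstep h i.
  rewrite /Lfun (bigD1 i) // [in RHS](bigD1 i) //=.
  rewrite (eq_bigr (fun j => (p j)^-1 * sqnorm (xk j - y j))); first by ring.
  by move=> j ne; rewrite Hoth.
have EA : cond_exp p (fun h' => Lfun p (x h') y) h
    = Lfun p xk y + \sum_i (sqnorm (x (rcons h i) i - y i) - sqnorm (xk i - y i)).
  rewrite /cond_exp.
  under eq_bigr => i _ do rewrite hprobS LS.
  rewrite (eq_bigr (fun i => hprob p h * (p i * Lfun p xk y
       + (sqnorm (x (rcons h i) i - y i) - sqnorm (xk i - y i))))); last first.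
    by move=> i _; field; rewrite gt_eqF.
  rewrite -mulr_sumr big_split /= -mulr_suml psum mul1r.
  by field; rewrite gt_eqF.
set gm := gam k.+1; set et := eta k.+1.
set Gv := fun i => sf xk i + et *: sg xk i.
have BC : forall i, sqnorm (x (rcons h i) i - y i) - sqnorm (xk i - y i)
    <= - (2 * gm) * dotv (Gv i) (xk i - y i) + gm ^+ 2 * sqnorm (Gv i).
  move=> i; have [Hp _] := Hstep h i; rewrite hk in Hp.
  have := proj_nonexp (Hcv i) Hp (Xy i).
  have -> : xk i - gam k.+1 *: (sf xk i + eta k.+1 *: sg xk i) - y i
      = (xk i - y i) - gm *: Gv i.
    by apply/rowP => j; rewrite /Gv /gm /et !mxE; ring.
  rewrite (sqnormB (xk i - y i)) sqnormZ dotvZr (dotvC (xk i - y i)); lra.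
have SBC : \sum_i (sqnorm (x (rcons h i) i - y i) - sqnorm (xk i - y i))
    <= - (2 * gm) * (\sum_i dotv (Gv i) (xk i - y i)) + gm ^+ 2 * \sum_i sqnorm (Gv i).
  apply: le_trans (ler_sum _ (fun i _ => BC i)) _.
  by rewrite big_split /= -!mulr_sumr.
have SD : mu * et * bsqnorm (bsub xk y) <= \sum_i dotv (Gv i) (xk i - y i).
  have -> : \sum_i dotv (Gv i) (xk i - y i)
      = bdot (sf xk) (bsub xk y) + et * bdot (sg xk) (bsub xk y).
    rewrite /bdot mulr_sumr -big_split; apply: eq_bigr => i _ /=.
    change (dotv (Gv i) (xk i - y i) = dotv (sf xk i) (xk i - y i)
       + et * dotv (sg xk i) (xk i - y i)).
    by rewrite dotvDl dotvZl.
  have h1 := sgf xk y Xxk Xy; have h2 := sgstrong xk y Xxk Xy.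
  have h3 := minstrong et xk (eta0 _) Xxk.
  rewrite bdotN in h1; rewrite bdotN (bsqC xk y) in h2.
  have h4 := ler_wpM2l (ltW (eta0 k.+1)) h2.
  rewrite -/et -/y in h3 h4; lra.
have CnE : forall C : 'I_d -> R, Cnorm C ^+ 2 = \sum_i C i ^+ 2.
  by move=> C; rewrite /Cnorm sqr_sqrtr // sumr_ge0 // => i _; apply: sqr_ge0.
have etle : et <= eta 0%N by apply: noninc_le0.
have SG : \sum_i sqnorm (Gv i) <= 2 * (Cnorm Cf ^+ 2 + eta 0%N ^+ 2 * Cnorm Cg ^+ 2).
  rewrite !CnE.
  have -> : 2 * (\sum_i Cf i ^+ 2 + eta 0%N ^+ 2 * \sum_i Cg i ^+ 2)
     = \sum_i (2 * Cf i ^+ 2 + 2 * eta 0%N ^+ 2 * Cg i ^+ 2).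
    by rewrite big_split /= -!mulr_sumr; ring.
  apply: ler_sum => i _; rewrite /Gv sqnormD sqnormZ.
  have y1 := young 1 1 (sf xk i) (et *: sg xk i).
  rewrite sqnormZ in y1.
  have c1 := sq_bound (sqnorm_ge0 _) (HCf xk i Xxk).
  have c2 := sq_bound (sqnorm_ge0 _) (HCg xk i Xxk).
  have e2 : et ^+ 2 <= eta 0%N ^+ 2.
    by rewrite !expr2; apply: ler_pM => //; apply: ltW; apply: eta0.
  have c3 : et ^+ 2 * sqnorm (sg xk i) <= eta 0%N ^+ 2 * Cg i ^+ 2.
    by apply: ler_pM => //; [apply: sqr_ge0 | apply: sqnorm_ge0].
  lra.
have pm0 : 0 < pmin p.
  rewrite /pmin; apply: (big_ind (fun v => 0 < v)) => //.
  by move=> a b ha hb; rewrite lt_min ha hb.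
have pmle : forall i, pmin p <= p i.
  by move=> i; rewrite /pmin (bigD1 i) //= ge_min lexx.
have LF : forall a b : bvec R n, pmin p * Lfun p a b <= bsqnorm (bsub a b).
  move=> a b; rewrite /Lfun mulr_sumr; apply: ler_sum => i _.
  change (pmin p * ((p i)^-1 * sqnorm (a i - b i)) <= sqnorm (a i - b i)).
  have q1 : pmin p / p i <= 1 by rewrite ler_pdivrMr // mul1r.
  rewrite mulrA; have := sqnorm_ge0 (a i - b i) => s0.
  by rewrite -[leRHS]mul1r; apply: ler_wpM2r.
have gm0 : 0 < gm := gam0 _.
have et0 : 0 < et := eta0 _.
have c0 : 0 < mu * gm * et * pmin p by rewrite !mulr_gt0.
have c1 : mu * gm * et * pmin p < 1.
  have mp0 : 0 < mu * pmin p by rewrite mulr_gt0.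
  rewrite ltr_pdivlMr // in Hge.
  have ge1 : gm * et <= gam 0%N * eta 0%N.
    by apply: ler_pM; [apply: ltW | apply: ltW | apply: noninc_le0 | apply: noninc_le0].
  have := ler_wpM2r (ltW mp0) ge1; lra.
set c := mu * gm * et * pmin p in c0 c1 *.
have blk : forall m (a b : 'rV[R]_m),
    c * (1 - 2 * c) * sqnorm (a + b) <= c * (1 - c) * sqnorm a + sqnorm b.
  move=> m a b; rewrite sqnormD.
  have sa := sqnorm_ge0 a; have sb := sqnorm_ge0 b.
  have [q0|q0] := lerP 0 (1 - 2 * c).
    have y1 := young c (1 - 2 * c) a b.
    have hc : 0 <= (c * (3 - 2 * c)) * sqnorm b.
      by apply: mulr_ge0 => //; apply: mulr_ge0; lra.
    lra.
  have hc : 0 <= c * (2 * c - 1) * sqnorm (a + b).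
    by apply: mulr_ge0; [apply: mulr_ge0; lra | apply: sqnorm_ge0].
  have hc2 : 0 <= c * (1 - c) * sqnorm a by apply: mulr_ge0 => //; apply: mulr_ge0; lra.
  rewrite sqnormD in hc; lra.
have GS : c * (1 - 2 * c) * Lfun p xk y <= c * (1 - c) * Lfun p xk y' + Lfun p y' y.
  rewrite /Lfun !mulr_sumr -big_split; apply: ler_sum => i _ /=.
  have -> : xk i - y i = (xk i - y' i) + (y' i - y i) by rewrite addrA subrK.
  have w0 : 0 <= (p i)^-1 by rewrite invr_ge0; apply: ltW.
  have := ler_wpM2l w0 (blk _ (xk i - y' i) (y' i - y i)); lra.
set dl := eta k - et.
have dl0 : 0 <= dl by rewrite /dl subr_ge0; apply: etadec.
have HS : (mu * et) ^+ 2 * bsqnorm (bsub y' y) <= dl ^+ 2 * Cnorm Cg ^+ 2.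
  have m1 := minstrong et y' et0 Xy'.
  have m2 := minstrong (eta k) y (eta0 k) Xy.
  have s1 := sgg y y' Xy Xy'.
  rewrite -/y -/y' in m1 m2 s1.
  rewrite bdotN in s1; rewrite (bsqC y' y) in m2.
  set Bd := bdot (sg y) (bsub y y') in s1.
  set Dy := bsqnorm (bsub y' y) in m1 m2 *.
  have D0 : 0 <= Dy by apply: sumr_ge0 => i _; apply: sqnorm_ge0.
  have p1 : dl * (G y - G y') <= dl * Bd by apply: ler_wpM2l => //; lra.
  have yng : 2 * dl * (mu * et) * Bd
      <= dl ^+ 2 * (\sum_i sqnorm (sg y i)) + (mu * et) ^+ 2 * Dy.
    rewrite /Bd /Dy -(bsqC y' y) /bdot /bsqnorm !mulr_sumr -big_split.
    by apply: ler_sum => i _; exact: young.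
  have sgB : \sum_i sqnorm (sg y i) <= Cnorm Cg ^+ 2.
    by rewrite CnE; apply: ler_sum => i _; apply: sq_bound; [apply: sqnorm_ge0 | apply: HCg].
  have p2 := ler_wpM2l (sqr_ge0 dl) sgB.
  have q : mu * et * Dy <= mu * eta k * Dy.
    by apply: ler_wpM2r => //; apply: ler_wpM2l; [apply: ltW | apply: etadec].
  have m3 : mu * et * Dy <= dl * Bd by rewrite /dl in p1 *; lra.
  have met0 : 0 <= mu * et by apply: mulr_ge0; apply: ltW.
  have p3 := ler_wpM2l met0 m3.
  lra.
rewrite EA.
have f1 := ler_wpM2l (ltW gm0) SD.
have f2 := ler_wpM2l (sqr_ge0 gm) SG.
have f3 := ler_wpM2l (mulr_ge0 (ltW gm0) (mulr_ge0 (ltW mu0) (ltW et0))) (LF xk y).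
have E1 : Lfun p xk y + \sum_i (sqnorm (x (rcons h i) i - y i) - sqnorm (xk i - y i))
    <= (1 - 2 * c) * Lfun p xk y + 2 * gm ^+ 2 * (Cnorm Cf ^+ 2 + eta 0%N ^+ 2 * Cnorm Cg ^+ 2).
  rewrite /c; lra.
have g1 : (1 - 2 * c) * Lfun p xk y <= (1 - c) * Lfun p xk y' + Lfun p y' y / c.
  rewrite -(ler_pM2l c0).
  have -> : c * ((1 - c) * Lfun p xk y' + Lfun p y' y / c) = c * (1 - c) * Lfun p xk y' + Lfun p y' y.
    by field; rewrite gt_eqF.
  by rewrite mulrA.
have g2 : Lfun p y' y / c <= 2 * Cnorm Cg ^+ 2 / (pmin p ^+ 2 * mu ^+ 3 * gm * et) * (eta k / et - 1) ^+ 2.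
  rewrite ler_pdivrMr //.
  have -> : 2 * Cnorm Cg ^+ 2 / (pmin p ^+ 2 * mu ^+ 3 * gm * et) * (eta k / et - 1) ^+ 2 * c
      = 2 * (dl ^+ 2 * Cnorm Cg ^+ 2) / (pmin p * (mu * et) ^+ 2).
    rewrite /c /dl; field.
    by rewrite !gt_eqF // ?mulr_gt0 // ?exprn_gt0 // ?mulr_gt0.
  have pme : 0 < pmin p * (mu * et) ^+ 2 by rewrite mulr_gt0 // exprn_gt0 // mulr_gt0.
  rewrite ler_pdivlMr //.
  have h1 := ler_wpM2l (sqr_ge0 (mu * et)) (LF y' y).
  have h2 : 0 <= dl ^+ 2 * Cnorm Cg ^+ 2 by apply: mulr_ge0; apply: sqr_ge0.
  lra.
lra.
Qed.
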